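(* In the Banach space $C^0([0,1])$ of continuous real functions on $[0,1]$ with the supremum norm, the set of functions which are not completely non-Hölder is meagre (i.e. of first Baire category).
   Context: For $\alpha>0$, a function $g:[0,1]\to\mathbb{R}$ is called $\alpha$-Hölder at $x_0$ from the right if $\limsup_{y\searrow x_0}\frac{|g(y)-g(x_0)|}{|y-x_0|^\alpha}<\infty$, and $\alpha$-Hölder at $x_0$ from the left if $\limsup_{y\nearrow x_0}\frac{|g(y)-g(x_0)|}{|y-x_0|^\alpha}<\infty$. The function $g$ is called completely non-Hölder if there is no $x_0\in[0,1]$ and no $\alpha>0$ such that $g$ is $\alpha$-Hölder at $x_0$ from the left or from the right. *)

(* Defs.v *)
From Stdlib Require Import Reals.
Open Scope R_scope.

Definition I01 (x : R) : Prop := 0 <= x <= 1.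

(* f restricted to [0,1] is continuous: f represents an element of C^0([0,1]).
   Values of f outside [0,1] play no role anywhere below. *)
Definition cont01 (f : R -> R) : Prop :=
  forall x, I01 x -> forall eps, 0 < eps ->
    exists delta, 0 < delta /\
      forall y, I01 y -> Rabs (y - x) < delta -> Rabs (f y - f x) < eps.

Definition sup_le (f g : R -> R) (r : R) : Prop :=
  forall x, I01 x -> Rabs (f x - g x) <= r.

(* alpha-Hölder at x0 from the right / left: the limsup of
   |g y - g x0| / |y - x0|^alpha (y -> x0 within [0,1]) is finite,
   i.e. the ratio is bounded on a one-sided punctured neighbourhood. *)
Definition holder_right (g : R -> R) (x0 alpha : R) : Prop :=
  exists C delta, 0 < delta /\
    forall y, I01 y -> x0 < y < x0 + delta ->
      Rabs (g y - g x0) <= C * Rpower (y - x0) alpha.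

Definition holder_left (g : R -> R) (x0 alpha : R) : Prop :=
  exists C delta, 0 < delta /\
    forall y, I01 y -> x0 - delta < y < x0 ->
      Rabs (g y - g x0) <= C * Rpower (x0 - y) alpha.

Definition completely_non_holder (g : R -> R) : Prop :=
  ~ exists x0 alpha, I01 x0 /\ 0 < alpha /\
      ((x0 < 1 /\ holder_right g x0 alpha) \/ (0 < x0 /\ holder_left g x0 alpha)).

(* Topology of C^0([0,1]) with the sup norm. Sets are predicates on R -> R;
   only their members that are continuous on [0,1] matter. *)
Definition in_closure (A : (R -> R) -> Prop) (h : R -> R) : Prop :=
  forall delta, 0 < delta -> exists a, cont01 a /\ A a /\ sup_le h a delta.

Definition nowhere_dense (A : (R -> R) -> Prop) : Prop :=
  ~ exists f eps, cont01 f /\ 0 < eps /\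
      forall h, cont01 h -> sup_le f h eps -> in_closure A h.

Definition meagre (S : (R -> R) -> Prop) : Prop :=
  exists A : nat -> ((R -> R) -> Prop),
    (forall n, nowhere_dense (A n)) /\
    forall f, cont01 f -> S f -> exists n, A n f.

(* Main.v *)
Require Import Defs.
From Stdlib Require Import Reals Lra Lia Classical ZArith.
Open Scope R_scope.

Definition cl (x : R) := Rmax 0 (Rmin 1 x).

Lemma cl_prop x y : I01 x -> I01 (cl y) /\ Rabs (cl y - x) <= Rabs (y - x).
Proof.
  unfold I01, cl, Rmax, Rmin; intros Hx.
  repeat destruct Rle_dec; split; try split_Rabs; lra.
Qed.

Lemma cl_id x : I01 x -> cl x = x.
Proof. unfold I01, cl, Rmax, Rmin; intros Hx; repeat destruct Rle_dec; lra. Qed.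

Lemma unif01 f : cont01 f -> forall e, 0 < e -> exists eta, 0 < eta /\
  forall x y, I01 x -> I01 y -> Rabs (x - y) < eta -> Rabs (f x - f y) < e.
Proof.
  intros Hf e He.
  assert (Hc : forall x, (fun c => 0 <= c <= 1) x -> continuity_pt (fun z => f (cl z)) x).
  { intros x Hx. unfold continuity_pt, continue_in, limit1_in, limit_in.
    intros e0 He0. destruct (Hf x Hx e0 He0) as [d [Hd Hd']].
    exists d; split; [lra|]. intros y [_ Hy]. simpl in *. unfold R_dist in *.
    rewrite (cl_id x Hx). destruct (cl_prop x y Hx) as [H1 H2].
    apply Hd'; auto. lra. }
  destruct (Heine _ _ (compact_P3 0 1) Hc (mkposreal e He)) as [[eta Heta] H].
  exists eta; split; auto. intros x y Hx Hy Hxy.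
  rewrite <- (cl_id x Hx), <- (cl_id y Hy). exact (H x y Hx Hy Hxy).
Qed.

Lemma nat_between P v : 0 < P -> -P < v -> exists k:nat, v < INR k * P <= v + P.
Proof.
  intros HP Hv. destruct (archimed (v / P)) as [H1 H2].
  assert (Hz : (0 <= up (v/P))%Z).
  { assert (-1 < v / P).
    { apply (Rmult_lt_reg_r P); auto. unfold Rdiv. rewrite Rmult_assoc, Rinv_l; lra. }
    assert (-1 < IZR (up (v/P))) by lra. apply lt_IZR in H0. lia. }
  exists (Z.to_nat (up (v/P))). rewrite INR_IZR_INZ, Z2Nat.id by lia.
  assert (E : v = v / P * P) by (field; lra).
  split.
  - rewrite E at 1. apply Rmult_lt_compat_r; lra.
  - rewrite E at 2. assert (IZR (up (v/P)) <= v/P + 1) by lra.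
    apply (Rmult_le_compat_r P) in H; lra.
Qed.

Lemma nat_between2 P v : 0 < P -> P <= v -> exists k:nat, v - P <= INR k * P < v.
Proof.
  intros HP Hv. destruct (archimed (- (v / P))) as [H1 H2].
  assert (1 <= v / P).
  { apply (Rmult_le_reg_r P); auto. unfold Rdiv. rewrite Rmult_assoc, Rinv_l; lra. }
  assert (Hz : (0 <= - up (- (v/P)))%Z).
  { assert (-1 < IZR (- up (- (v/P)))) by (rewrite opp_IZR; lra). apply lt_IZR in H0. lia. }
  exists (Z.to_nat (- up (- (v/P)))). rewrite INR_IZR_INZ, Z2Nat.id by lia.
  rewrite opp_IZR.
  assert (E : v = v / P * P) by (field; lra).
  split.
  - rewrite E at 1. assert (v/P - 1 <= - IZR (up (- (v/P)))) by lra.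
    apply (Rmult_le_compat_r P) in H0; lra.
  - rewrite E at 2. apply Rmult_lt_compat_r; lra.
Qed.

Lemma phase_val (tau phi : R) (k : nat) : 0 < tau ->
  sin ((phi * tau + INR k * (2 * PI * tau)) / tau) = sin phi.
Proof.
  intros Ht. replace ((phi * tau + INR k * (2 * PI * tau)) / tau) with (phi + 2 * INR k * PI)
    by (field; lra). apply sin_period.
Qed.

Lemma osc_right tau x0 : 0 < tau -> 0 <= x0 -> exists y,
  x0 < y <= x0 + 2 * PI * tau /\ 1 <= Rabs (sin (y / tau) - sin (x0 / tau)).
Proof.
  intros Ht Hx. pose proof PI_RGT_0. assert (0 < PI * tau) by (apply Rmult_lt_0_compat; lra).
  destruct (Rle_lt_dec (sin (x0 / tau)) 0) as [Hs | Hs].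
  - destruct (nat_between (2*PI*tau) (x0 - PI/2 * tau)) as [k Hk]; [lra|lra|].
    exists (PI/2 * tau + INR k * (2*PI*tau)). split; [lra|].
    rewrite phase_val, sin_PI2 by auto. split_Rabs; lra.
  - destruct (nat_between (2*PI*tau) (x0 - 3*(PI/2) * tau)) as [k Hk]; [lra|lra|].
    exists (3*(PI/2) * tau + INR k * (2*PI*tau)). split; [lra|].
    rewrite phase_val, sin_3PI2 by auto. split_Rabs; lra.
Qed.

Lemma osc_left tau x0 : 0 < tau -> 4 * PI * tau <= x0 -> exists y,
  x0 - 2 * PI * tau <= y < x0 /\ 1 <= Rabs (sin (y / tau) - sin (x0 / tau)).
Proof.
  intros Ht Hx. pose proof PI_RGT_0. assert (0 < PI * tau) by (apply Rmult_lt_0_compat; lra).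
  destruct (Rle_lt_dec (sin (x0 / tau)) 0) as [Hs | Hs].
  - destruct (nat_between2 (2*PI*tau) (x0 - PI/2 * tau)) as [k Hk]; [lra|lra|].
    exists (PI/2 * tau + INR k * (2*PI*tau)). split; [lra|].
    rewrite phase_val, sin_PI2 by auto. split_Rabs; lra.
  - destruct (nat_between2 (2*PI*tau) (x0 - 3*(PI/2) * tau)) as [k Hk]; [lra|lra|].
    exists (3*(PI/2) * tau + INR k * (2*PI*tau)). split; [lra|].
    rewrite phase_val, sin_3PI2 by auto. split_Rabs; lra.
Qed.

Definition NN (n:nat) := INR n + 1.
Lemma NN_pos n : 0 < NN n.
Proof. unfold NN; pose proof (pos_INR n); lra. Qed.

Definition A (n:nat) (a:R->R) : Prop :=
  exists x0,
   (0 <= x0 <= 1 - /NN n /\ forall y, I01 y -> x0 < y < x0 + /NN n ->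
        Rabs (a y - a x0) <= NN n * Rpower (y - x0) (/NN n)) \/
   (/NN n <= x0 <= 1 /\ forall y, I01 y -> x0 - /NN n < y < x0 ->
        Rabs (a y - a x0) <= NN n * Rpower (x0 - y) (/NN n)).

Lemma notA n h d : 0 < d ->
 (forall x0, 0 <= x0 <= 1 - /NN n -> exists y, I01 y /\ x0 < y < x0 + /NN n /\
     NN n * Rpower (y - x0) (/NN n) + 2*d < Rabs (h y - h x0)) ->
 (forall x0, /NN n <= x0 <= 1 -> exists y, I01 y /\ x0 - /NN n < y < x0 /\
     NN n * Rpower (x0 - y) (/NN n) + 2*d < Rabs (h y - h x0)) ->
 forall a, sup_le h a d -> ~ A n a.
Proof.
  intros Hd HR HL a Ha [x0 [[Hx Hb] | [Hx Hb]]].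
  - destruct (HR x0 Hx) as [y [Hy [Hy2 Hy3]]].
    assert (I01 x0) by (unfold I01; pose proof (NN_pos n); pose proof (Rinv_0_lt_compat _ (NN_pos n)); lra).
    specialize (Hb y Hy Hy2). pose proof (Ha y Hy). pose proof (Ha x0 H).
    assert (Rabs (h y - h x0) <= Rabs (h y - a y) + Rabs (a y - a x0) + Rabs (a x0 - h x0)).
    { replace (h y - h x0) with ((h y - a y) + (a y - a x0) + (a x0 - h x0)) by ring.
      eapply Rle_trans; [apply Rabs_triang|]. apply Rplus_le_compat_r, Rabs_triang. }
    rewrite Rabs_minus_sym in H1. lra.
  - destruct (HL x0 Hx) as [y [Hy [Hy2 Hy3]]].
    assert (I01 x0) by (unfold I01; pose proof (NN_pos n); pose proof (Rinv_0_lt_compat _ (NN_pos n)); lra).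
    specialize (Hb y Hy Hy2). pose proof (Ha y Hy). pose proof (Ha x0 H).
    assert (Rabs (h y - h x0) <= Rabs (h y - a y) + Rabs (a y - a x0) + Rabs (a x0 - h x0)).
    { replace (h y - h x0) with ((h y - a y) + (a y - a x0) + (a x0 - h x0)) by ring.
      eapply Rle_trans; [apply Rabs_triang|]. apply Rplus_le_compat_r, Rabs_triang. }
    rewrite Rabs_minus_sym in H1. lra.
Qed.

Lemma inv_lt d N : 0 < d -> / d < N -> / N < d.
Proof.
  intros Hd H. assert (0 < /d) by (apply Rinv_0_lt_compat; auto).
  rewrite <- (Rinv_inv d). apply Rinv_lt_contravar; auto. apply Rmult_lt_0_compat; lra.
Qed.

Lemma rpow_cmp t a b : 0 < t < 1 -> b <= a -> Rpower t a <= Rpower t b.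
Proof.
  intros Ht Hab. unfold Rpower.
  assert (ln t < 0) by (rewrite <- ln_1; apply ln_increasing; lra).
  destruct (Req_dec a b) as [->|Hne]; [lra|].
  left; apply exp_increasing. nra.
Qed.

Lemma holder_bound C al N t v : 0 < t < 1 -> / N <= al -> Rabs C < N ->
  v <= C * Rpower t al -> v <= N * Rpower t (/ N).
Proof.
  intros Ht Hal HC Hv.
  pose proof (rpow_cmp t al (/N) Ht Hal).
  assert (0 < Rpower t al) by (unfold Rpower; apply exp_pos).
  pose proof (Rle_abs C). pose proof (Rabs_pos C). nra.
Qed.

Lemma cover f : cont01 f -> ~ completely_non_holder f -> exists n, A n f.
Proof.
  intros _ H. apply NNPP in H. destruct H as [x0 [al [Hx [Hal [[Hx1 [C [d [Hd Hc]]]] | [Hx1 [C [d [Hd Hc]]]]]]]]].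
  - destruct (INR_unbounded (Rmax (Rmax (Rabs C) (/d)) (Rmax (/al) (/(1-x0))))) as [n Hn].
    assert (HN : INR n < NN n) by (unfold NN; lra).
    pose proof (Rmax_l (Rmax (Rabs C) (/d)) (Rmax (/al) (/(1-x0)))).
    pose proof (Rmax_r (Rmax (Rabs C) (/d)) (Rmax (/al) (/(1-x0)))).
    pose proof (Rmax_l (Rabs C) (/d)). pose proof (Rmax_r (Rabs C) (/d)).
    pose proof (Rmax_l (/al) (/(1-x0))). pose proof (Rmax_r (/al) (/(1-x0))).
    assert (h1 : / NN n < d) by (apply inv_lt; lra).
    assert (h2 : / NN n < al) by (apply inv_lt; lra).
    assert (h3 : / NN n < 1 - x0) by (apply inv_lt; lra).
    exists n, x0. left. split; [unfold I01 in Hx; lra|].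
    intros y Hy Hy2. assert (Hv := Hc y Hy ltac:(lra)).
    pose proof (Rabs_pos (f y - f x0)).
    assert (0 < / NN n) by (apply Rinv_0_lt_compat, NN_pos).
    apply (holder_bound C al (NN n) (y - x0) _); try lra. unfold I01 in Hx; lra.
  - destruct (INR_unbounded (Rmax (Rmax (Rabs C) (/d)) (Rmax (/al) (/x0)))) as [n Hn].
    assert (HN : INR n < NN n) by (unfold NN; lra).
    pose proof (Rmax_l (Rmax (Rabs C) (/d)) (Rmax (/al) (/x0))).
    pose proof (Rmax_r (Rmax (Rabs C) (/d)) (Rmax (/al) (/x0))).
    pose proof (Rmax_l (Rabs C) (/d)). pose proof (Rmax_r (Rabs C) (/d)).
    pose proof (Rmax_l (/al) (/x0)). pose proof (Rmax_r (/al) (/x0)).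
    assert (h1 : / NN n < d) by (apply inv_lt; lra).
    assert (h2 : / NN n < al) by (apply inv_lt; lra).
    assert (h3 : / NN n < x0) by (apply inv_lt; lra).
    exists n, x0. right. split; [unfold I01 in Hx; lra|].
    intros y Hy Hy2. assert (Hv := Hc y Hy ltac:(lra)).
    pose proof (Rabs_pos (f y - f x0)).
    assert (0 < / NN n) by (apply Rinv_0_lt_compat, NN_pos).
    apply (holder_bound C al (NN n) (x0 - y) _); try lra. unfold I01 in Hx; lra.
Qed.

Lemma sin_cont c tau : forall x e, 0 < e -> exists d, 0 < d /\
  forall y, Rabs (y - x) < d -> Rabs (c * sin (y / tau) - c * sin (x / tau)) < e.
Proof.
  intros x e He.
  assert (Hc : continuity (fun z => c * sin (z / tau))).
  { apply continuity_mult; [apply continuity_const; intros ?; reflexivity|].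
    apply (continuity_comp (fun z => z / tau) sin); [|apply continuity_sin].
    unfold Rdiv. apply continuity_mult; [apply derivable_continuous, derivable_id|].
    apply continuity_const; intros ?; reflexivity. }
  specialize (Hc x). unfold continuity_pt, continue_in, limit1_in, limit_in in Hc.
  destruct (Hc e He) as [d [Hd Hd']]. exists d; split; auto.
  intros y Hy. destruct (Req_dec y x) as [->|Hne].
  - unfold Rminus; rewrite Rplus_opp_r, Rabs_R0; auto.
  - apply (Hd' y). split; [split; [exact I| auto]| exact Hy].
Qed.

Lemma tri a b c : 0 <= c -> c * Rabs b <= Rabs (a + c * b) + Rabs a.
Proof.
  intros Hc. rewrite <- (Rabs_pos_eq c) at 1 by auto. rewrite <- Rabs_mult.
  replace (c * b) with ((a + c * b) + - a) at 1 by ring.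
  eapply Rle_trans; [apply Rabs_triang|]. rewrite Rabs_Ropp; lra.
Qed.

Lemma key N c P D F H : 0 < N -> 0 < c -> P <= c / (4 * N) -> 1 <= D -> F < c / 8 ->
  c * D <= H + F -> N * P + 2 * (c / 8) < H.
Proof.
  intros HN Hc HP HD HF HH.
  assert (N * P <= c / 4).
  { apply Rle_trans with (N * (c / (4 * N))); [apply Rmult_le_compat_l; lra|].
    right; field; lra. }
  assert (c <= c * D) by nra. lra.
Qed.

Lemma rp N c t L : 0 < N -> 0 < c -> 0 < t <= L -> L <= Rpower (c / (4 * N)) N ->
  Rpower t (/ N) <= c / (4 * N).
Proof.
  intros HN Hc Ht HL.
  assert (0 < c / (4 * N)) by (apply Rdiv_lt_0_compat; lra).
  apply Rle_trans with (Rpower (Rpower (c / (4 * N)) N) (/ N)).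
  - apply Rle_Rpower_l; [left; apply Rinv_0_lt_compat; auto| lra].
  - rewrite Rpower_mult, Rinv_r, Rpower_1 by lra. lra.
Qed.

Lemma nd n : nowhere_dense (A n).
Proof.
  intros [f [eps [Hf [He H]]]].
  set (c := eps / 2). set (N := NN n).
  assert (Hc : 0 < c) by (unfold c; lra).
  assert (HN : 0 < N) by apply NN_pos.
  assert (HiN : 0 < / N) by (apply Rinv_0_lt_compat; auto).
  assert (Hi2 : / (2 * N) = / N / 2) by (field; lra).
  destruct (unif01 f Hf (c / 8)) as [eta [Heta Hu]]; [lra|].
  set (B := Rpower (c / (4 * N)) N).
  assert (HB : 0 < B) by (unfold B, Rpower; apply exp_pos).
  set (L := Rmin (Rmin B (eta / 2)) (/ (2 * N))).
  assert (HL1 : L <= B) by (unfold L; eapply Rle_trans; [apply Rmin_l| apply Rmin_l]).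
  assert (HL2 : L <= eta / 2) by (unfold L; eapply Rle_trans; [apply Rmin_l| apply Rmin_r]).
  assert (HL3 : L <= / N / 2) by (unfold L; rewrite <- Hi2; apply Rmin_r).
  assert (HL : 0 < L).
  { unfold L. apply Rmin_pos; [apply Rmin_pos; lra| lra]. }
  pose proof PI_RGT_0.
  set (tau := L / (2 * PI)).
  assert (Ht : 0 < tau) by (unfold tau; apply Rdiv_lt_0_compat; lra).
  assert (HtL : 2 * PI * tau = L) by (unfold tau; field; lra).
  set (h := fun x => f x + c * sin (x / tau)).
  assert (Hch : cont01 h).
  { intros x Hx e He'. destruct (Hf x Hx (e/2)) as [d1 [Hd1 Hd1']]; [lra|].
    destruct (sin_cont c tau x (e/2)) as [d2 [Hd2 Hd2']]; [lra|].
    exists (Rmin d1 d2); split; [apply Rmin_pos; auto|].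
    intros y Hy Hyx. pose proof (Rmin_l d1 d2). pose proof (Rmin_r d1 d2).
    specialize (Hd1' y Hy ltac:(lra)). specialize (Hd2' y ltac:(lra)).
    unfold h. replace (f y + c * sin (y / tau) - (f x + c * sin (x / tau)))
      with ((f y - f x) + (c * sin (y / tau) - c * sin (x / tau))) by ring.
    eapply Rle_lt_trans; [apply Rabs_triang|]. lra. }
  assert (Hsup : sup_le f h eps).
  { intros x _. unfold h. replace (f x - (f x + c * sin (x / tau))) with (- (c * sin (x / tau))) by ring.
    rewrite Rabs_Ropp, Rabs_mult, (Rabs_pos_eq c) by lra.
    pose proof (SIN_bound (x / tau)).
    assert (Rabs (sin (x / tau)) <= 1) by (split_Rabs; lra). unfold c in *. nra. }
  destruct (H h Hch Hsup (c / 8)) as [a [_ [Ha Hsa]]]; [lra|].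
  refine (notA n h (c / 8) _ _ _ a Hsa Ha); [lra| |].
  - intros x0 Hx0. fold N in Hx0 |- *.
    destruct (osc_right tau x0 Ht ltac:(lra)) as [y [Hy1 Hy2]].
    exists y. split; [unfold I01; lra|]. split; [lra|].
    apply (key N c _ (Rabs (sin (y / tau) - sin (x0 / tau))) (Rabs (f y - f x0))); auto.
    + apply (rp N c (y - x0) L); auto; lra.
    + apply Hu; unfold I01; try lra. split_Rabs; lra.
    + unfold h. replace (f y + c * sin (y / tau) - (f x0 + c * sin (x0 / tau)))
        with ((f y - f x0) + c * (sin (y / tau) - sin (x0 / tau))) by ring.
      apply tri; lra.
  - intros x0 Hx0. fold N in Hx0 |- *.
    destruct (osc_left tau x0 Ht ltac:(lra)) as [y [Hy1 Hy2]].
    exists y. split; [unfold I01; lra|]. split; [lra|].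
    apply (key N c _ (Rabs (sin (y / tau) - sin (x0 / tau))) (Rabs (f y - f x0))); auto.
    + apply (rp N c (x0 - y) L); auto; lra.
    + apply Hu; unfold I01; try lra. split_Rabs; lra.
    + unfold h. replace (f y + c * sin (y / tau) - (f x0 + c * sin (x0 / tau)))
        with ((f y - f x0) + c * (sin (y / tau) - sin (x0 / tau))) by ring.
      apply tri; lra.
Qed.

Theorem mainTheorem3 :
  meagre (fun f : R -> R => ~ completely_non_holder f).
Proof.
  exists A. split; [exact nd|]. intros f Hf Hn. exact (cover f Hf Hn).
Qed.
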